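(* Let $d\in\mathbb N$, $\beta\in(1,\infty)$, $\theta\in[1,\infty]$, and let $K_r$ be as in the context. Then, with implicit constant independent of $r$, $$\|K_r\|_{\mathrm L^\theta(\mathbb R^{1+2d})}\lesssim r^{\mathsf Q(\frac1\theta-1)}\qquad\text{for all }r>0.$$
   Context: All $2\times2$ matrices act on $\mathbb R^{2d}$ as their tensor product with $\mathrm{Id}_d$. Let $g_1(r)=r^\beta\sin\log r$, $g_2(r)=r^\beta\cos\log r$, $\mathcal W(r)=\begin{pmatrix}g_1&g_2\\ \dot g_1&\dot g_2\end{pmatrix}(r)$, $\mathcal D_\delta=\mathrm{diag}(\mathrm{Id}_d,\delta\,\mathrm{Id}_d)$, $\mathcal A_{m_0}(r)=\mathcal D_{m_0}^{-1}\mathcal W(r)$ for $m_0\ne0$. Let $c_0:=(-1)^d$ and $\mathsf Q:=(2\beta-1)d+1$. Fix a nonnegative $\psi\in C_c^\infty(\mathbb R^{1+2d})$ with unit mass and support in $(-2,-1)\times B_1(0)\times B_1(0)$. For $r>0$, $$K_r(u_0,u_1,u_2)=c_0^{-1}r^{-\mathsf Q}\Bigl(\frac{u_0}{r}\Bigr)^d\psi\Bigl(\frac{u_0}{r},\mathcal A_{u_0/r}(r)^{-1}\binom{u_1}{u_2}\Bigr)$$ (set to $0$ when $u_0=0$). *)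

(* Defs.v *)
From HB Require Import structures.
From mathcomp Require Import all_boot all_order all_algebra.
From mathcomp Require Import all_classical all_reals all_analysis.
From mathcomp Require Import lebesgue_integral_fubini.
Set Implicit Arguments. Unset Strict Implicit. Unset Printing Implicit Defensive.
Import Order.TTheory GRing.Theory Num.Theory.
Import numFieldNormedType.Exports.
Local Open Scope classical_set_scope.
Local Open Scope ring_scope.

Record msp (R : realType) := MSp {
  msp_disp : measure_display;
  msp_T : measurableType msp_disp;
  msp_mu : {measure set msp_T -> \bar R} }.

(* lebS R n : the space R^(n+1) = (...((R * R) * R) ... * R) with the
   (iterated) product of one-dimensional Lebesgue measures. *)
Fixpoint lebS (R : realType) (n : nat) : msp R :=
  match n with
  | 0 => @MSp R _ (measurableTypeR R) (@lebesgue_measure R)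
  | n'.+1 => let P := lebS R n' in
     @MSp R _ (msp_T P * measurableTypeR R)%type
       (product_measure1 (msp_mu P) (@lebesgue_measure R))
  end.

Fixpoint coord (R : realType) (n : nat) : msp_T (lebS R n) -> nat -> R :=
  match n return msp_T (lebS R n) -> nat -> R with
  | 0 => fun x _ => (x : R)
  | n'.+1 => fun x i =>
      if (i < n'.+1)%N then coord (n := n') x.1 i else (x.2 : R)
  end.

Definition toRow (R : realType) (n : nat) (x : msp_T (lebS R n)) : 'rV[R]_n.+1 :=
  \row_(i < n.+1) coord x i.

Fixpoint iterD (R : realType) (V : normedModType R) (vs : seq V) (f : V -> R)
  : V -> R :=
  match vs with
  | [::] => f
  | v :: vs' => fun x => 'D_v (iterD vs' f) x
  end.

Definition smooth (R : realType) (V : normedModType R) (f : V -> R) : Prop :=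
  forall vs : seq V,
    continuous (iterD vs f) /\ (forall (v x : V), derivable (iterD vs f) x v).

Section Kernel.
Context (R : realType).

Definition g1 (beta : R) (r : R) : R := r `^ beta * sin (ln r).
Definition g2 (beta : R) (r : R) : R := r `^ beta * cos (ln r).

Definition Wmat (beta r : R) : 'M[R]_2 :=
  \matrix_(i < 2, j < 2)
    if i == 0 then (if j == 0 then g1 beta r else g2 beta r)
    else (if j == 0 then derive1 (g1 beta) r else derive1 (g2 beta) r).

Definition Dmat (delta : R) : 'M[R]_2 :=
  \matrix_(i < 2, j < 2) (if i == j then (if i == 0 then 1 else delta) else 0).

Definition Amat (beta m0 r : R) : 'M[R]_2 := invmx (Dmat m0) *m Wmat beta r.

(* action of M (x) Id_d on R^{2d} = R^d x R^d, written in blocks *)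
Definition tens_act (d : nat) (M : 'M[R]_2) (u : 'rV[R]_(d + d)) : 'rV[R]_(d + d) :=
  row_mx (M 0 0 *: lsubmx u + M 0 1 *: rsubmx u)
         (M 1 0 *: lsubmx u + M 1 1 *: rsubmx u).

Definition c0 (d : nat) : R := (-1) ^+ d.
Definition QQ (d : nat) (beta : R) : R := (2 * beta - 1) * d%:R + 1.

(* K_r(u0,u1,u2), with u = (u0, u1, u2) in R^{1+2d} = 'rV_(1 + (d + d)) *)
Definition Kr (d : nat) (beta : R) (psi : 'rV[R]_(1 + (d + d)) -> R)
    (r : R) (u : 'rV[R]_(1 + (d + d))) : R :=
  let u0 := lsubmx u 0 0 in
  let u12 := rsubmx u in
  if u0 == 0 then 0 else
  (c0 d)^-1 * r `^ (- QQ d beta) * (u0 / r) ^+ d *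
    psi (row_mx (u0 / r)%:M (tens_act (invmx (Amat beta (u0 / r) r)) u12)).

Definition in_unit_ball (d : nat) (v : 'rV[R]_d) : Prop := \sum_(i < d) v 0 i ^+ 2 < 1.

Definition supp_box (d : nat) : set 'rV[R]_(1 + (d + d)) :=
  [set u | -2 < lsubmx u 0 0 < -1 /\ in_unit_ball (lsubmx (rsubmx u))
                                  /\ in_unit_ball (rsubmx (rsubmx u))].

(* 1/theta for theta in [1, +oo] (1/+oo = 0) *)
Definition inv_exponent (theta : \bar R) : R :=
  match theta with x%:E => x^-1 | _ => 0 end.

End Kernel.

(* Main.v *)
Require Import Defs.
From HB Require Import structures.
From mathcomp Require Import all_boot all_order all_algebra.
From mathcomp Require Import all_classical all_reals all_analysis.
From mathcomp Require Import lebesgue_integral_fubini.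
From mathcomp Require Import ring lra ess_sup_inf.
Import Order.TTheory GRing.Theory Num.Theory.
Import numFieldNormedType.Exports.
Local Open Scope classical_set_scope.
Local Open Scope ring_scope.
Lemma int_mono d (T : measurableType d) (R : realType) (mu : {measure set T -> \bar R})
  (f g : T -> \bar R) : (forall x, 0 <= f x)%E -> (forall x, f x <= g x)%E ->
  (\int[mu]_x f x <= \int[mu]_x g x)%E.
Proof.
move=> f0 fg.
have g0 : forall x, (0 <= g x)%E by move=> x; exact: le_trans (f0 x) (fg x).
rewrite !ge0_integralTE//; apply: le_ereal_sup => _ [h hf <-].
exists h => //= x; exact: le_trans (hf x) (fg x).
Qed.

Definition boxn (R : realType) (n : nat) (c : nat -> R) : set (msp_T (lebS R n)) :=
  [set x | forall j, (j <= n)%N -> `|Defs.coord x j| <= c j].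

Arguments boxn {R} n c.
Lemma boxn_meas (R : realType) (n : nat) (c : nat -> R) : (forall j, 0 <= c j) ->
  measurable (boxn n c) /\
  msp_mu (lebS R n) (boxn n c) = (\prod_(j < n.+1) (2 * c j))%:E.
Proof.
move=> c0; elim: n => [|n [IHm IHe]].
  have -> : boxn 0 c = [set` `[- c 0%N, c 0%N]] :> set R.
    apply/seteqP; split => x /=.
      by move/(_ 0%N isT); rewrite in_itv /= ler_norml.
    by rewrite in_itv /= -ler_norml => h [|]. 
  split; first exact: measurable_itv.
  rewrite /= lebesgue_measure_itv /= big_ord1 lte_fin.
  case: ifPn => h; first by rewrite -EFinD; congr (_%:E); ring.
  have : c 0%N = 0 by apply/eqP; rewrite eq_le c0 andbT; move: h; rewrite -leNgt; lra.
  by move=> ->; rewrite mulr0.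
have E : boxn n.+1 c = boxn n c `*` [set y : R | `|y| <= c n.+1].
  apply/seteqP; split => -[x y] /=.
    move=> h; split.
      by move=> j jn; have := h j (leqW jn); rewrite /= ltnS jn.
    by have := h n.+1 (leqnn _); rewrite /= ltnn.
  move=> [h1 h2] j; rewrite leq_eqVlt => /orP[/eqP ->|jn] /=; first by rewrite ltnn.
  by rewrite jn; apply: h1.
have my : measurable [set y : R | `|y| <= c n.+1].
  have -> : [set y : R | `|y| <= c n.+1] = [set` `[- c n.+1, c n.+1]].
    by apply/seteqP; split => x /=; rewrite in_itv /= ler_norml.
  exact: measurable_itv.
rewrite E; split; first exact: measurableX.
rewrite /= product_measure1E// IHe [in RHS]big_ord_recr /= EFinM; congr (_ * _)%E.
have -> : [set y : R | `|y| <= c n.+1] = [set` `[- c n.+1, c n.+1]].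
  by apply/seteqP; split => x /=; rewrite in_itv /= ler_norml.
rewrite lebesgue_measure_itv /= lte_fin.
case: ifPn => h; first by rewrite -EFinD; congr (_%:E); ring.
have : c n.+1 = 0 by apply/eqP; rewrite eq_le c0 andbT; move: h; rewrite -leNgt; lra.
by move=> ->; rewrite mulr0.
Qed.
Section Mx.
Variable R : realType.
Implicit Types M N : 'M[R]_2.

Lemma ord2E (i : 'I_2) : i = 0 \/ i = 1.
Proof. by case: i => [[|[|//]] hi]; [left|right]; apply/val_inj. Qed.

Lemma mx2P M N : M 0 0 = N 0 0 -> M 0 1 = N 0 1 -> M 1 0 = N 1 0 -> M 1 1 = N 1 1 -> M = N.
Proof.
move=> h00 h01 h10 h11; apply/matrixP => i j.
by case: (ord2E i) => ->; case: (ord2E j) => ->.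
Qed.

Lemma mulmx2E M N i j : (M *m N) i j = M i 0 * N 0 j + M i 1 * N 1 j.
Proof. rewrite !mxE big_ord_recr big_ord1 /=; congr (M i _ * N _ j + M i _ * N _ j); exact/val_inj. Qed.

Lemma o10 : (1 == 0 :> 'I_2) = false. Proof. by []. Qed.
Lemma o01 : (0 == 1 :> 'I_2) = false. Proof. by []. Qed.
Lemma Dmat00 m : Dmat m 0 0 = 1 :> R. Proof. by rewrite !mxE ?eqxx ?o10 ?o01. Qed.
Lemma Dmat01 m : Dmat m 0 1 = 0 :> R. Proof. by rewrite !mxE ?eqxx ?o10 ?o01. Qed.
Lemma Dmat10 m : Dmat m 1 0 = 0 :> R. Proof. by rewrite !mxE ?eqxx ?o10 ?o01. Qed.
Lemma Dmat11 m : Dmat m 1 1 = m :> R. Proof. by rewrite !mxE ?eqxx ?o10 ?o01. Qed.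
Lemma Wmat00 b r : Wmat b r 0 0 = g1 b r :> R. Proof. by rewrite !mxE ?eqxx ?o10 ?o01. Qed.
Lemma Wmat01 b r : Wmat b r 0 1 = g2 b r :> R. Proof. by rewrite !mxE ?eqxx ?o10 ?o01. Qed.
Lemma Wmat10 b r : Wmat b r 1 0 = derive1 (g1 b) r :> R. Proof. by rewrite !mxE ?eqxx ?o10 ?o01. Qed.
Lemma Wmat11 b r : Wmat b r 1 1 = derive1 (g2 b) r :> R. Proof. by rewrite !mxE ?eqxx ?o10 ?o01. Qed.

Lemma invD (m : R) : m != 0 -> invmx (Dmat m) = Dmat m^-1.
Proof.
move=> m0.
have h : Dmat m *m Dmat m^-1 = 1%:M.
  apply: mx2P; rewrite !mulmx2E ?Dmat00 ?Dmat01 ?Dmat10 ?Dmat11 !mxE /= ?eqxx ?o10 ?o01; by rewrite ?mulr0 ?mul0r ?mulr1 ?mul1r ?addr0 ?add0r ?mulfV.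
have [u _] := mulmx1_unit h.
by rewrite -[RHS]mul1mx -(mulVmx u) -mulmxA h mulmx1.
Qed.

Lemma tens_actM d M N (u : 'rV[R]_(d + d)) :
  tens_act M (tens_act N u) = tens_act (M *m N) u.
Proof.
rewrite /tens_act row_mxKl row_mxKr !mulmx2E; congr row_mx;
by rewrite !scalerDr !scalerA !scalerDl addrACA.
Qed.

Lemma tens_act1 d (u : 'rV[R]_(d + d)) : tens_act 1%:M u = u.
Proof.
by rewrite /tens_act !mxE /= !scale1r !scale0r addr0 add0r hsubmxK.
Qed.
End Mx.
Section Der.
Variable R : realType.
Lemma g1_der (beta r : R) : 0 < r ->
  derive1 (g1 beta) r = beta * r `^ (beta - 1) * sin (ln r) + r `^ beta * (cos (ln r) * r^-1).
Proof.
move=> r0.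
have h1 : is_derive r 1 (fun x : R => x `^ beta) (beta * r `^ (beta - 1)) by exact: is_derive1_powR.
have h2 : is_derive r 1 (sin \o (@ln R)) (cos (ln r) * r^-1).
  exact: (is_derive1_comp (is_derive_sin _) (is_derive1_ln r0)).
have H := is_deriveM h1 h2.
rewrite derive1E.
have -> : 'D_1 (g1 beta) r = 'D_1 ((fun x : R => x `^ beta) * (sin \o (@ln R))) r by [].
rewrite (derive_val (is_derive := H)) /=.
rewrite /GRing.scale /=; ring.
Qed.
End Der.
Section Mx2.
Variable R : realType.
Definition adj2 (M : 'M[R]_2) : 'M[R]_2 :=
  \matrix_(i < 2, j < 2)
    if i == 0 then (if j == 0 then M 1 1 else - M 0 1)
    else (if j == 0 then - M 1 0 else M 0 0).

Lemma unit2 (M : 'M[R]_2) : M 0 0 * M 1 1 - M 0 1 * M 1 0 != 0 -> M \in unitmx.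
Proof.
move=> hd.
have h : M *m ((M 0 0 * M 1 1 - M 0 1 * M 1 0)^-1 *: adj2 M) = 1%:M.
  apply: mx2P; rewrite !mulmx2E !mxE /= ?eqxx ?o10 ?o01 /=.
  - by field.
  - by rewrite mulr0n; field.
  - by rewrite mulr0n; field.
  - by field.
by have [] := mulmx1_unit h.
Qed.

Lemma g2_der (beta r : R) : 0 < r ->
  derive1 (g2 beta) r = beta * r `^ (beta - 1) * cos (ln r) + r `^ beta * (- sin (ln r) * r^-1).
Proof.
move=> r0.
have h1 : is_derive r 1 (fun x : R => x `^ beta) (beta * r `^ (beta - 1)) by exact: is_derive1_powR.
have h2 : is_derive r 1 (cos \o (@ln R)) (- sin (ln r) * r^-1).
  exact: (is_derive1_comp (is_derive_cos _) (is_derive1_ln r0)).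
have H := is_deriveM h1 h2.
rewrite derive1E.
have -> : 'D_1 (g2 beta) r = 'D_1 ((fun x : R => x `^ beta) * (cos \o (@ln R))) r by [].
rewrite (derive_val (is_derive := H)) /=.
rewrite /GRing.scale /=; ring.
Qed.

Lemma W_unit (beta r : R) : 0 < r -> Wmat beta r \in unitmx.
Proof.
move=> r0; apply: unit2.
rewrite Wmat00 Wmat01 Wmat10 Wmat11 g1_der // g2_der // /g1 /g2.
set P := r `^ beta; set s := sin (ln r); set c := cos (ln r).
have -> : P * s * (beta * r `^ (beta - 1) * c + P * (- s * r^-1)) -
   P * c * (beta * r `^ (beta - 1) * s + P * (c * r^-1)) = - (P * P * r^-1) * (c ^+ 2 + s ^+ 2).
  by ring.
rewrite cos2Dsin2 mulr1 oppr_eq0 !mulf_neq0 ?invr_eq0 ?gt_eqF // powR_gt0 //.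
Qed.

Lemma A_unit (beta m r : R) : m != 0 -> 0 < r -> Amat beta m r \in unitmx.
Proof.
move=> m0 r0; rewrite /Amat unitmx_mul W_unit // andbT unitmx_inv.
apply: unit2; by rewrite !Dmat00 !Dmat01 !Dmat10 !Dmat11 mulr0 subr0 mul1r.
Qed.
End Mx2.
Section Pt.
Variable R : realType.

Lemma Aent (beta m r : R) : m != 0 ->
  [/\ Amat beta m r 0 0 = g1 beta r, Amat beta m r 0 1 = g2 beta r,
      Amat beta m r 1 0 = m^-1 * derive1 (g1 beta) r &
      Amat beta m r 1 1 = m^-1 * derive1 (g2 beta) r].
Proof.
move=> m0; rewrite /Amat invD // !mulmx2E !Dmat00 !Dmat01 !Dmat10 !Dmat11.
by rewrite !Wmat00 !Wmat01 !Wmat10 !Wmat11 !mul0r !mul1r !addr0 !add0r.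
Qed.

Lemma Abnd (beta m r : R) : 0 < beta -> 1 <= `|m| -> 0 < r ->
  [/\ `|Amat beta m r 0 0| <= r `^ beta, `|Amat beta m r 0 1| <= r `^ beta,
      `|Amat beta m r 1 0| <= (beta + 1) * (r `^ beta / r) &
      `|Amat beta m r 1 1| <= (beta + 1) * (r `^ beta / r)].
Proof.
move=> b0 m1 r0.
have m0 : m != 0 by rewrite -normr_gt0; lra.
have [-> -> -> ->] := Aent beta m r m0.
have P0 : 0 <= r `^ beta := powR_ge0 _ _.
have Pr : 0 <= r `^ beta / r by rewrite divr_ge0 // ltW.
have hP : r `^ (beta - 1) = r `^ beta / r.
  rewrite powRB; last by rewrite (gt_eqF r0) implybT.
  by rewrite powRr1 // ltW.
have im : `|m^-1| <= 1 by rewrite normrV ?unitfE // invf_le1 // (lt_le_trans _ m1).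
have hs := sin_max (ln r); have hc := cos_max (ln r).
rewrite g1_der // g2_der // /g1 /g2 hP.
split.
- by rewrite normrM ger0_norm // ler_piMr.
- by rewrite normrM ger0_norm // ler_piMr.
- rewrite (_ : _ * _ = m^-1 * ((beta * sin (ln r) + cos (ln r)) * (r `^ beta / r))); last by ring.
  rewrite normrM -[X in _ <= X]mul1r ler_pM // normrM (ger0_norm Pr) ler_wpM2r //.
  by rewrite (le_trans (ler_normD _ _)) // normrM gtr0_norm // lerD // ler_piMr // ltW.
- rewrite (_ : _ * _ = m^-1 * ((beta * cos (ln r) - sin (ln r)) * (r `^ beta / r))); last by ring.
  rewrite normrM -[X in _ <= X]mul1r ler_pM // normrM (ger0_norm Pr) ler_wpM2r //.
  by rewrite (le_trans (ler_normB _ _)) // normrM gtr0_norm // lerD // ler_piMr // ltW.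
Qed.
End Pt.
Section Pt2.
Variable R : realType.

Lemma ball_coord d (w : 'rV[R]_d) i : in_unit_ball w -> `|w 0 i| <= 1.
Proof.
rewrite /in_unit_ball => h.
have : w 0 i ^+ 2 <= \sum_(k < d) w 0 k ^+ 2.
  rewrite (bigD1 i) //= lerDl; apply: sumr_ge0 => k _; exact: sqr_ge0.
move=> h2; have h3 : w 0 i ^+ 2 <= 1 by lra.
rewrite ler_norml; apply/andP; split; nra.
Qed.

Definition cbox d (beta r : R) (j : nat) : R :=
  if j == 0%N then 2 * r else if (j <= d)%N then 2 * r `^ beta
  else 2 * ((beta + 1) * (r `^ beta / r)).

Lemma cbox_ge0 d beta r j : 0 < beta -> 0 < r -> 0 <= cbox d beta r j.
Proof.
move=> b0 r0; rewrite /cbox; case: ifP => _; first lra.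
case: ifP => _; first by rewrite mulr_ge0 ?powR_ge0.
by rewrite !mulr_ge0 ?powR_ge0 ?invr_ge0 ?ltW //; lra.
Qed.

Lemma toRowE n (x : msp_T (lebS R n)) j (hj : (j < n.+1)%N) :
  toRow x 0 (Ordinal hj) = Defs.coord x j.
Proof. by rewrite /toRow mxE. Qed.

End Pt2.
Arguments cbox {R} d beta r j.
Arguments toRowE {R n} x j hj.
Arguments ball_coord {R d} w i.
Arguments A_unit {R beta m r}.
Arguments Abnd {R beta m r}.
Arguments tens_actM {R d}.
Arguments tens_act1 {R d}.

Section Pt3.
Variable R : realType.

Lemma c0inv d : `|(@c0 R d)^-1| = 1.
Proof.
rewrite /c0 -exprVn normrX normrV ?unitrN1 // normrN1 invr1 expr1n //.
Qed.

Lemma Kr_pt d (beta : R) (psi : 'rV[R]_(1 + (d + d)) -> R) (M r : R) (x : msp_T (lebS R (d + d))) :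
  1 < beta -> 0 < r -> 0 <= M -> (forall u, `|psi u| <= M) ->
  (forall u, psi u != 0 -> @supp_box R d u) ->
  `|@Kr R d beta psi r (toRow x)| <=
    (2 ^+ d * M * r `^ (- QQ d beta)) * \1_(boxn (d + d) (cbox d beta r)) x.
Proof.
move=> b1 r0 M0 HM supp.
have B0 : 0 <= 2 ^+ d * M * r `^ (- QQ d beta) by rewrite !mulr_ge0 ?powR_ge0 ?exprn_ge0.
have I0 : 0 <= 2 ^+ d * M * r `^ (- QQ d beta) * \1_(boxn (d + d) (cbox d beta r)) x.
  by rewrite mulr_ge0 // indicE ler0n.
rewrite /Defs.Kr.
set u0 := lsubmx _ 0 0.
set u12 := rsubmx _.
case: ifPn => [_|u0n]; first by rewrite normr0.
set m := u0 / r.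
set v := tens_act (invmx (Amat beta m r)) u12.
set p := row_mx m%:M v.
have [pz|pnz] := eqVneq (psi p) 0; first by rewrite pz mulr0 normr0.
have [/andP[hm1 hm2] [hb1 hb2]] := supp p pnz.
have pm : lsubmx p 0 0 = m by rewrite row_mxKl mxE eqxx mulr1n.
have pv : rsubmx p = v by rewrite row_mxKr.
rewrite pm in hm1 hm2; rewrite pv in hb1 hb2.
have m0 : m != 0 by rewrite neq_lt; apply/orP; left; lra.
have mlt : `|m| <= 2 by rewrite ltr0_norm; lra.
have m1 : 1 <= `|m| by rewrite ltr0_norm; lra.
have hA := A_unit m0 r0.
have hu : u12 = tens_act (Amat beta m r) v by rewrite /v tens_actM mulmxV // tens_act1.
have b0 : 0 < beta by lra.
have [a00 a01 a10 a11] := Abnd b0 m1 r0.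
have addE : forall (a b : R) (w z : 'rV[R]_d) k, (a *: w + b *: z) 0 k = a * w 0 k + b * z 0 k.
  by move=> *; rewrite !mxE.
rewrite indicE mem_set; last first.
  move=> j hj; rewrite /cbox; case: j hj => [|i] hi.
    have -> : Defs.coord x 0 = u0.
      by rewrite /u0 mxE -(toRowE x 0 (ltn0Sn _)); congr (toRow x 0 _); exact/val_inj.
    have -> : u0 = m * r by rewrite /m divfK ?gt_eqF.
    by rewrite eqxx normrM (gtr0_norm r0) ler_wpM2r // ltW.
  have hi' : (i.+1 < (d + d).+1)%N by [].
  rewrite /=.
  case: (ltnP i d) => hid.
    have -> : Defs.coord x i.+1 = lsubmx u12 0 (Ordinal hid).
      by rewrite /u12 !mxE -(toRowE x _ hi'); congr (toRow x 0 _); exact/val_inj.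
    rewrite hu /tens_act row_mxKl addE.
    rewrite (le_trans (ler_normD _ _)) // mulr2n mulrDl mul1r lerD //.
      by rewrite normrM -[X in _ <= X]mulr1 ler_pM // ball_coord.
    by rewrite normrM -[X in _ <= X]mulr1 ler_pM // ball_coord.
  have hk : (i - d < d)%N by rewrite ltn_subLR //; rewrite ltnS in hi.
  have -> : Defs.coord x i.+1 = rsubmx u12 0 (Ordinal hk).
    by rewrite /u12 !mxE /= subnKC.
  rewrite hu /tens_act row_mxKr addE.
  rewrite (le_trans (ler_normD _ _)) // mulr2n mulrDl mul1r lerD //.
    by rewrite normrM -[X in _ <= X]mulr1 ler_pM // ball_coord.
  by rewrite normrM -[X in _ <= X]mulr1 ler_pM // ball_coord.
rewrite mulr1 !normrM c0inv mul1r (ger0_norm (powR_ge0 _ _)) normrX.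
have e1 : `|m| ^+ d <= 2 ^+ d by rewrite lerXn2r // nnegrE.
rewrite [X in _ <= X]mulrC [X in _ <= X]mulrA ler_pM // ?exprn_ge0 //.
  by rewrite mulr_ge0 ?exprn_ge0 ?powR_ge0.
by rewrite ler_wpM2l ?powR_ge0.
Qed.
End Pt3.
Section Vol.
Variable R : realType.

Lemma rQ d (beta r : R) : 0 < r ->
  r `^ QQ d beta = r * (r `^ beta ^+ 2 / r) ^+ d.
Proof.
move=> r0.
have rn0 : r != 0 by rewrite gt_eqF.
rewrite /QQ powRD ?rn0 ?implybT // powRr1 ?ltW // mulrC; congr (_ * _).
rewrite powRrM powR_mulrn ?powR_ge0 //; congr (_ ^+ _).
rewrite powRB ?rn0 ?implybT // powRr1 ?ltW //.
by rewrite (_ : 2 * beta = beta + beta) ?powRD ?rn0 ?implybT // ?expr2 //; ring.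
Qed.

Lemma vol d (beta r : R) : 0 < beta -> 0 < r ->
  msp_mu (lebS R (d + d)) (boxn (d + d) (cbox d beta r)) =
  ((4 * (16 * (beta + 1)) ^+ d) * r `^ QQ d beta)%:E.
Proof.
move=> b0 r0.
have [_ ->] := @boxn_meas R (d + d) (cbox d beta r) (fun j => @cbox_ge0 R d beta r j b0 r0).
congr (_%:E).
rewrite big_ord_recl big_split_ord /=.
rewrite (eq_bigr (fun _ => 2 * (2 * r `^ beta))); last first.
  by move=> i _; rewrite /cbox /= ltn_ord.
rewrite [X in _ * (_ * X)](eq_bigr (fun _ => 2 * (2 * ((beta + 1) * (r `^ beta / r))))); last first.
  by move=> i _; rewrite /cbox /= ltnNge leq_addr.
rewrite !prodr_const !card_ord /cbox eqxx rQ //.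
rewrite -exprMn.
rewrite (_ : 2 * (2 * r `^ beta) * (2 * (2 * ((beta + 1) * (r `^ beta / r))))
  = (16 * (beta + 1)) * (r `^ beta ^+ 2 / r)); last by ring.
rewrite exprMn; ring.
Qed.
End Vol.
Theorem corollary2p6 (R : realType) (d : nat) (beta : R) (theta : \bar R)
    (psi : 'rV[R]_(1 + (d + d)) -> R) :
  1 < beta ->
  (1 <= theta)%E ->
  smooth psi ->
  (forall u, 0 <= psi u) ->
  (\int[msp_mu (lebS R (d + d))]_x (psi (toRow x))%:E = 1)%E ->
  compact (closure [set u | psi u != 0]) ->
  closure [set u | psi u != 0] `<=` @supp_box R d ->
  exists C : R, forall r : R, 0 < r ->
    (Lnorm (msp_mu (lebS R (d + d))) theta
        (fun x => (@Kr R d beta psi r (toRow x))%:E)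
      <= (C * r `^ (@QQ R d beta * (inv_exponent theta - 1)))%:E)%E.
Proof.
move=> b1 th1 spsi psi0 int1 cK supp.
have cpsi : continuous psi by have [] := spsi [::].
have [M M0 HM] : exists2 M : R, 0 <= M & forall u, `|psi u| <= M.
  have := compact_bounded (continuous_compact (continuous_subspaceT cpsi) cK).
  move=> /pinfty_ex_gt0 [M M0 HM]; exists M; first exact: ltW.
  move=> u; have [->|nz] := eqVneq (psi u) 0; first by rewrite normr0 ltW.
  by apply: HM; exists u => //; apply: subset_closure.
have supp' : forall u, psi u != 0 -> @supp_box R d u.
  by move=> u h; apply: supp; apply: subset_closure.
have b0 : 0 < beta by lra.
set Q := QQ d beta.
set C' := 4 * (16 * (beta + 1)) ^+ d.
have C'1 : 1 <= C'.
  have h16 : 1 <= 16 * (beta + 1) by lra.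
  rewrite /C'; have := exprn_ege1 d h16; lra.
exists (2 ^+ d * M * C') => r r0.
have hpt := fun x => @Kr_pt R d beta psi M r x b1 r0 M0 HM supp'.
set B := 2 ^+ d * M * r `^ (- Q).
have B0 : 0 <= B by rewrite /B !mulr_ge0 ?powR_ge0 ?exprn_ge0.
have [mbox _] := @boxn_meas R (d + d) (cbox d beta r) (fun j => @cbox_ge0 R d beta r j b0 r0).
have vbox := @vol R d beta r b0 r0.
case: theta th1 => [t| |] //= th1.
  have t1 : 1 <= t by rewrite -lee_fin.
  have t0 : 0 < t by lra.
  set box := boxn (d + d) (cbox d beta r).
  have hint : (\int[msp_mu (lebS R (d + d))]_x (`|(@Kr R d beta psi r (toRow x))%:E| `^ t)
      <= ((B `^ t) * (C' * r `^ Q))%:E)%E.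
    apply: (le_trans (@int_mono _ _ _ _ _ (fun x => ((B `^ t) * \1_box x)%:E) _ _)).
    - by move=> x; exact: poweR_ge0.
    - move=> x; rewrite abse_EFin poweR_EFin lee_fin.
      have := hpt x; rewrite indicE; case: (x \in box) => /=; rewrite ?mulr1 ?mulr0 => h.
        by apply: (ge0_ler_powR (ltW t0)); rewrite ?nnegrE ?normr_ge0.
      have -> : `|@Kr R d beta psi r (toRow x)| = 0 :> R by apply/eqP; rewrite eq_le h normr_ge0.
      by rewrite powR0 ?gt_eqF.
    rewrite (@integralZl_indic _ _ _ _ setT measurableT (fun _ => box) (B `^ t)); last 2 first.
    - by move=> h; move: (powR_ge0 B t); rewrite leNgt h.
    - exact: mbox.
    by rewrite integral_indic // setIT vbox EFinM.
  rewrite unlock /=.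
  have ti0 : 0 <= t^-1 by rewrite invr_ge0 ltW.
  have i1 : ((B `^ t * (C' * r `^ Q))%:E \in `[0%E, +oo%E])%E.
    rewrite in_itv /= leey andbT lee_fin !mulr_ge0 ?powR_ge0 // exprn_ge0 //; lra.
  have i2 : ((\int[msp_mu (lebS R (d + d))]_x (`|(@Kr R d beta psi r (toRow x))%:E| `^ t))
     \in `[0%E, +oo%E])%E.
    by rewrite in_itv /= leey andbT integral_ge0 // => x _; exact: poweR_ge0.
  rewrite (le_trans (gt0_ler_poweR ti0 i2 i1 hint)) //.
  rewrite poweR_EFin lee_fin.
  have C'0 : 0 <= C' by lra.
  have eB : (B `^ t) `^ t^-1 = B by rewrite -powRrM mulfV ?gt_eqF // powRr1.
  have CQ : 0 <= C' * r `^ Q by rewrite mulr_ge0 // powR_ge0.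
  rewrite (powRM _ (powR_ge0 _ _) CQ) eB (powRM _ C'0 (powR_ge0 _ _)) -powRrM.
  have -> : r `^ (Q * (t^-1 - 1)) = r `^ (- Q) * r `^ (Q * t^-1).
    by rewrite -powRD ?(gt_eqF r0) ?implybT //; congr (_ `^ _); ring.
  have hc : C' `^ t^-1 <= C' by apply: ler1_powR => //; rewrite invf_le1.
  rewrite /B.
  have -> : 2 ^+ d * M * r `^ (- Q) * (C' `^ t^-1 * r `^ (Q * t^-1)) =
    (2 ^+ d * M * r `^ (- Q) * r `^ (Q * t^-1)) * C' `^ t^-1 by ring.
  have -> : 2 ^+ d * M * C' * (r `^ (- Q) * r `^ (Q * t^-1)) =
    (2 ^+ d * M * r `^ (- Q) * r `^ (Q * t^-1)) * C' by ring.
  by rewrite ler_wpM2l // !mulr_ge0 ?powR_ge0 ?exprn_ge0.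
have Bbnd : B <= 2 ^+ d * M * C' * r `^ (Q * (0 - 1)).
  rewrite sub0r mulrN1 /B ler_wpM2r ?powR_ge0 // ler_peMr //.
  by rewrite mulr_ge0 ?exprn_ge0.
rewrite unlock /=; case: ifPn => _; last first.
  by rewrite lee_fin (le_trans B0).
apply/ess_supP; apply: nearW => x /=.
rewrite lee_fin (le_trans (hpt x)) // (le_trans _ Bbnd) //.
by rewrite ler_piMr // indicE; case: (_ \in _).
Qed.
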